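(* Let $X_1,\dots,X_n$ be independent real-valued integrable random variables and define constants $\lambda_0=0$, $\lambda_k=\mathbb E\sqrt{X_k^2+\lambda_{k-1}^2}$ for $k=1,\dots,n$. Then $$\lambda_n\le\mathbb E\Big(\sum_{k=1}^nX_k^2\Big)^{1/2}\le2\lambda_n .$$ *)

(* Defs.v *)
From HB Require Import structures.
From mathcomp Require Import all_boot all_order all_algebra.
From mathcomp Require Import all_classical all_reals all_analysis.
Set Implicit Arguments. Unset Strict Implicit. Unset Printing Implicit Defensive.
Import Order.TTheory GRing.Theory Num.Theory.
Local Open Scope classical_set_scope.
Local Open Scope ring_scope.

(* Random variables are indexed by nat; only indices 1..n are used. *)

Definition mutually_independent {d} {T : measurableType d} {R : realType}
  (P : probability T R) (n : nat) (X : nat -> T -> R) : Prop :=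
  forall (B : nat -> set R), (forall k, measurable (B k)) ->
  forall J : seq nat, uniq J -> all (fun k => (1 <= k <= n)%N) J ->
    P (\big[setI/setT]_(k <- J) (X k @^-1` B k)) =
    (\prod_(k <- J) P (X k @^-1` B k))%E.

Fixpoint lam {d} {T : measurableType d} {R : realType}
  (P : probability T R) (X : nat -> T -> R) (k : nat) : R :=
  match k with
  | 0 => 0
  | k'.+1 => fine (\int[P]_x (Num.sqrt (X k'.+1 x ^+ 2 + lam P X k' ^+ 2))%:E)
  end.

(* Main.v *)
Require Import Defs.
From HB Require Import structures.
From mathcomp Require Import all_boot all_order all_algebra.
From mathcomp Require Import all_classical all_reals all_analysis.
From mathcomp Require Import measurable_realfun.
From mathcomp Require Import ring lra.
Import Order.TTheory GRing.Theory Num.Theory.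
Import numFieldTopology.Exports numFieldNormedType.Exports.
Local Open Scope classical_set_scope.
Local Open Scope ring_scope.
Lemma count_le (R : realType) (N : nat) (a : R) : 0 <= a -> a <= N%:R ->
  \sum_(i < N) ((i.+1%:R <= a)%R : bool)%:R <= a <= \sum_(i < N) ((i.+1%:R <= a)%R : bool)%:R + 1.
Proof.
elim: N a => [|N IH] a a0 aN.
  by rewrite big_ord0 add0r a0 (le_trans aN) // ler01.
rewrite big_ord_recl /=.
rewrite (eq_bigr (fun i : 'I_N => ((i.+1%:R <= a - 1)%R : bool)%:R)); last first.
  by move=> i _; rewrite lerBrDr /bump /= add1n -natr1.
have [a1|a1] := lerP 1 a.
  have aN' : a - 1 <= N%:R by rewrite lerBlDr natr1.
  have := IH (a - 1); rewrite subr_ge0 a1 aN' => /(_ isT isT).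
  move=> /andP[h1 h2]. rewrite /= in h1 h2 *. apply/andP; split; lra.
rewrite big1; last first.
  move=> i _; have -> : (i.+1%:R <= a - 1)%R = false; last by [].
  by apply/negbTE; rewrite -ltNge; apply: (lt_le_trans (y := 0)); [lra | exact: ler0n].
have -> : (false%:R : R) = 0 by []. rewrite !add0r; apply/andP; split; lra.
Qed.

Lemma final_pos (R : realType) (C s : R) : 0 <= C -> (forall N : nat, - (C / N.+1%:R) <= s) -> 0 <= s.
Proof.
move=> C0 H; rewrite leNgt; apply/negP => s0.
have hs : 0 < - s by rewrite oppr_gt0.
have := truncnS_gt (C / - s).
set M := (Num.trunc _).+1%:R => hM.
have M0 : 0 < M by rewrite ltr0Sn.
have := H (Num.trunc (C / - s)); rewrite -/M.
have : C / M < - s.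
  rewrite ltr_pdivrMr // -ltr_pdivrMl //. by rewrite mulrC.
move=> h1; rewrite lerNl => h2; by have := lt_le_trans h1 h2; rewrite ltxx.
Qed.
Lemma Rintegral_sum_int d (T : measurableType d) (R : realType) (mu : {measure set T -> \bar R})
  (D : set T) (mD : measurable D) (I : Type) (s : seq I) (f : I -> T -> R) :
  (forall i, mu.-integrable D (EFin \o f i)) ->
  \int[mu]_(x in D) (\sum_(i <- s) f i x) = \sum_(i <- s) \int[mu]_(x in D) f i x /\
  mu.-integrable D (EFin \o (fun x => \sum_(i <- s) f i x)).
Proof.
move=> fi; elim: s => [|i s [IH1 IH2]].
  rewrite big_nil; under eq_Rintegral do rewrite big_nil.
  rewrite Rintegral_cst // mul0r; split => //.
  apply: (eq_integrable _ (cst 0%E)) => //; last exact: integrable0.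
  by move=> x _; rewrite /= big_nil.
rewrite big_cons; under eq_Rintegral do rewrite big_cons.
rewrite RintegralD // IH1; split => //.
apply: (eq_integrable _ ((EFin \o f i) \+ (EFin \o (fun x => \sum_(j <- s) f j x)))) => //.
  by move=> x _; rewrite /= big_cons EFinD.
exact: integrableD.
Qed.
Lemma iMul d (T : measurableType d) (R : realType) (mu : {measure set T -> \bar R})
  (A : set T) (mA : measurable A) (h Z : T -> R)
  (mh : measurable_fun setT h) (mZ : measurable_fun setT Z)
  (hb : forall x, `|h x| <= 1) (iZ : mu.-integrable A (EFin \o Z)) :
  mu.-integrable A (EFin \o (fun x => h x * Z x)).
Proof.
apply: (le_integrable mA _ _ iZ).
  by apply/measurable_EFinP; apply: measurable_funTS; exact: measurable_funM.
move=> x _ /=; rewrite lee_fin normrM.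
by rewrite -[leRHS]mul1r ler_wpM2r.
Qed.
Lemma stair d (T : measurableType d) (R : realType) (P : probability T R)
  (A : set T) (mA : measurable A) (V Z : T -> R)
  (mV : measurable_fun setT V) (mZ : measurable_fun setT Z)
  (V0 : forall x, 0 <= V x) (V1 : forall x, V x <= 1)
  (iZ : P.-integrable A (EFin \o Z))
  (H : forall c t : R, 0 <= \int[P]_(x in A `&` [set x | t <= c * V x]) Z x) :
  0 <= \int[P]_(x in A) (V x * Z x).
Proof.
set C := \int[P]_(x in A) `|Z x|.
have C0 : 0 <= C by apply: Rintegral_ge0 => x _.
have iaZ : P.-integrable A (EFin \o (fun x => `|Z x|)) := integrable_norm iZ.
apply: (@final_pos R C _ C0) => N.
set K : R := N.+1%:R.
have K0 : 0 < K by rewrite ltr0Sn.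
pose E (i : nat) := [set x | i.+1%:R <= K * V x].
have mKV : measurable_fun setT (fun x => K * V x).
  exact: measurable_funM (measurable_cst _) mV.
have mE i : measurable (E i).
  have -> : E i = (fun x => K * V x) @^-1` `[i.+1%:R, +oo[.
    by apply/seteqP; split => x /=; rewrite in_itv /= andbT.
  by rewrite -[X in measurable X]setTI; apply: mKV => //; exact: measurable_itv.
have indE i x : \1_(E i) x = ((i.+1%:R <= K * V x)%R : bool)%:R.
  rewrite indicE; case: (boolP (i.+1%:R <= K * V x)) => h.
    by rewrite mem_set.
  by rewrite memNset //= => h'; move/negP: h.
pose Vm x := K^-1 * \sum_(i < N.+1) \1_(E i) x.
have mVm : measurable_fun setT Vm.
  apply: measurable_funM; first exact: measurable_cst.
  by apply: measurable_sum => i; exact: measurable_indic.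
have Dbd x : 0 <= V x - Vm x <= K^-1.
  have := @count_le R N.+1 (K * V x).
  rewrite mulr_ge0 ?(ltW K0) // ler_piMr ?(ltW K0) // => /(_ isT isT).
  set S := \sum_(i < N.+1) _ => /andP[h1 h2].
  have -> : Vm x = K^-1 * S.
    by rewrite /Vm; congr (_ * _); apply: eq_bigr => i _; exact: indE.
  have Kn : K != 0 by rewrite gt_eqF.
  have -> : V x - K^-1 * S = K^-1 * (K * V x - S) by field.
  have Ki0 : 0 <= K^-1 by rewrite invr_ge0 ltW.
  apply/andP; split; first by apply: mulr_ge0 => //; rewrite subr_ge0.
  by rewrite -[leRHS]mulr1; apply: ler_wpM2l => //; rewrite lerBlDl.
have Vmb x : `|Vm x| <= 1.
  have := Dbd x; move: (V0 x) (V1 x) => a b.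
  have Ki : K^-1 <= 1 by rewrite invr_le1 // ?unitfE ?gt_eqF // ler1n.
  move: (Vm x) (K^-1) Ki => w k Ki /andP[c e].
  rewrite ler_norml; apply/andP; split; lra.
have Db x : `|V x - Vm x| <= 1.
  have := Dbd x.
  have Ki : K^-1 <= 1 by rewrite invr_le1 // ?unitfE ?gt_eqF // ler1n.
  move: (V x - Vm x) (K^-1) Ki => w k Ki /andP[c e].
  rewrite ler_norml; apply/andP; split; lra.
have iVm : P.-integrable A (EFin \o (fun x => Vm x * Z x)) by exact: iMul.
have iD : P.-integrable A (EFin \o (fun x => (V x - Vm x) * Z x)).
  by apply: iMul => //; exact: measurable_funB.
have -> : \int[P]_(x in A) (V x * Z x) =
    \int[P]_(x in A) (Vm x * Z x) + \int[P]_(x in A) ((V x - Vm x) * Z x).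
  rewrite -RintegralD //; apply: eq_Rintegral => x _; ring.
have hb : 0 <= \int[P]_(x in A) (Vm x * Z x).
  have ti i : P.-integrable A (EFin \o (fun x => K^-1 * \1_(E i) x * Z x)).
    apply: iMul => //.
      by apply: measurable_funM; [exact: measurable_cst | exact: measurable_indic].
    move=> x; rewrite normrM indicE [`|K^-1|]ger0_norm ?invr_ge0 ?(ltW K0) //.
    have Ki : K^-1 <= 1 by rewrite invr_le1 // ?unitfE ?gt_eqF // ler1n.
    by case: (_ \in _); rewrite /= ?normr1 ?normr0 ?mulr1 ?mulr0.
  have -> : \int[P]_(x in A) (Vm x * Z x) =
      \int[P]_(x in A) (\sum_(i < N.+1) (K^-1 * \1_(E i) x * Z x)).
    apply: eq_Rintegral => x _; rewrite /Vm -mulrA mulr_suml mulr_sumr.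
    by apply: eq_bigr => i _; rewrite mulrA.
  rewrite (@Rintegral_sum_int _ _ _ P A mA _ _ (fun (i : 'I_N.+1) x => K^-1 * \1_(E i) x * Z x) (fun i => ti i)).1.
  apply: sumr_ge0 => i _.
  under eq_Rintegral do rewrite -mulrA.
  rewrite RintegralZl //; last first.
    apply: iMul => //.
    by move=> x; rewrite indicE; case: (_ \in _); rewrite /= ?normr1 ?normr0.
  apply: mulr_ge0; first by rewrite invr_ge0 ltW.
  have := H K i.+1%:R; rewrite Rintegral_mkcondr.
  suff -> : \int[P]_(x in A) (Z \_ [set x | i.+1%:R <= K * V x]) x =
            \int[P]_(x in A) (\1_(E i) x * Z x) by [].
  apply: eq_Rintegral => x _; rewrite patchE indicE.
  by case: (_ \in _); rewrite /= ?mul1r ?mul0r.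
have hc : - (K^-1 * C) <= \int[P]_(x in A) ((V x - Vm x) * Z x).
  rewrite -mulNr -RintegralZl //.
  have Ki : K^-1 <= 1 by rewrite invr_le1 // ?unitfE ?gt_eqF // ler1n.
  apply: le_Rintegral => //.
    apply: (@iMul _ _ _ P A mA (fun=> - K^-1) (fun x => `|Z x|)) => //.
      by apply: measurableT_comp; [exact: normr_measurable | exact: mZ].
    by move=> _; rewrite normrN ger0_norm // invr_ge0 ltW.
  move=> x _; have := Dbd x => /andP[c e].
  have h1 : - ((V x - Vm x) * `|Z x|) <= (V x - Vm x) * Z x.
    rewrite lerNl -mulrN; apply: ler_wpM2l => //.
    by rewrite -normrN ler_norm.
  apply: le_trans h1; rewrite mulNr lerN2; apply: ler_wpM2r => //.
by apply: le_trans (lerD hb hc); rewrite add0r mulrC.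
Qed.
Lemma indep_int d (T : measurableType d) (R : realType) (P : probability T R)
  (A : set T) (mA : measurable A) (W : {mfun T >-> R})
  (hW : forall B, measurable B -> P (A `&` W @^-1` B) = (P A * P (W @^-1` B))%E)
  (h : R -> \bar R) (mh : measurable_fun [set: R] h) (h0 : forall y, (0 <= h y)%E) :
  (\int[P]_(x in A) h (W x) = P A * \int[P]_x h (W x))%E.
Proof.
have mhW : measurable_fun setT (h \o W) by exact: measurableT_comp.
rewrite (eq_measure_integral (mrestr P mA)); last first.
  by move=> B mB BA; change (P B = P (B `&` A)); rewrite setIidl.
have E : (\int[mrestr P mA]_x h (W x) = \int[mrestr P mA]_(x in A) h (W x))%E.
  rewrite (@ge0_negligible_integral _ _ _ _ _ (~` A)) //.
  all: cycle 1. all: try exact: measurableC. all: try by move=> *; apply: h0.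
  all: try by change (P (~` A `&` A) = 0%E); rewrite setICl measure0.
  all: try by rewrite setTD setCK.
rewrite -E.
rewrite -[X in (_ = _ * X)%E](ge0_integral_distribution W mh h0).
have -> : (\int[mrestr P mA]_x h (W x) = \int[pushforward (mrestr P mA) W]_(y in setT) h y)%E.
  by rewrite (ge0_integral_pushforward (measurable_funPT W)) //= preimage_setT.
have PA0 : (0 <= fine (P A))%R by apply: fine_ge0; apply: measure_ge0.
have PAE : P A = (fine (P A))%:E by rewrite fineK // fin_num_measure.
rewrite (eq_measure_integral (mscale (NngNum PA0) (distribution P W))); last first.
  move=> B mB _; change (P (W @^-1` B `&` A) = (fine (P A))%:E * P (W @^-1` B))%E.
  by rewrite -PAE setIC hW.
by rewrite ge0_integral_mscale //= -PAE.
Qed.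
Lemma sqrt_sq_le (R : realType) (x y a b : R) : 0 <= y -> 0 <= a -> 0 <= b -> y <= a + b ->
  Num.sqrt (x ^+ 2 + y ^+ 2) <= Num.sqrt (x ^+ 2 + a ^+ 2) + b.
Proof.
move=> y0 a0 b0 yab.
set s := Num.sqrt (x ^+ 2 + a ^+ 2).
have s0 : 0 <= s by exact: sqrtr_ge0.
have ss : s ^+ 2 = x ^+ 2 + a ^+ 2 by rewrite sqr_sqrtr // addr_ge0 // sqr_ge0.
have sa : a <= s by rewrite -(ger0_norm a0) -sqrtr_sqr ler_sqrt ?lerDr ?sqr_ge0 // addr_ge0 // sqr_ge0.
rewrite -(ger0_norm (addr_ge0 s0 b0)) -sqrtr_sqr ler_sqrt; last first.
  exact: sqr_ge0.
nra.
Qed.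

Lemma tangent (R : realType) (x y l : R) : 0 <= l -> 0 <= y ->
  Num.sqrt (x ^+ 2 + l ^+ 2) + l / Num.sqrt (x ^+ 2 + l ^+ 2) * (y - l)
  <= Num.sqrt (x ^+ 2 + y ^+ 2).
Proof.
move=> l0 y0.
set m := Num.sqrt (x ^+ 2 + l ^+ 2).
set q := Num.sqrt (x ^+ 2 + y ^+ 2).
have m0 : 0 <= m by exact: sqrtr_ge0.
have q0 : 0 <= q by exact: sqrtr_ge0.
have mm : m ^+ 2 = x ^+ 2 + l ^+ 2 by rewrite sqr_sqrtr // addr_ge0 // sqr_ge0.
have qq : q ^+ 2 = x ^+ 2 + y ^+ 2 by rewrite sqr_sqrtr // addr_ge0 // sqr_ge0.
have [->|mpos] := eqVneq m 0.
  by rewrite invr0 mulr0 mul0r addr0.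
have mp : 0 < m by rewrite lt_def mpos m0.
have E : m + l / m * (y - l) = (x ^+ 2 + l * y) / m.
  have -> : x ^+ 2 + l * y = m ^+ 2 + l * y - l ^+ 2 by rewrite mm; ring.
  by field.
rewrite E ler_pdivrMr //.
have key : (x ^+ 2 + l * y) ^+ 2 <= (q * m) ^+ 2.
  rewrite exprMn qq mm -subr_ge0.
  have -> : (x ^+ 2 + y ^+ 2) * (x ^+ 2 + l ^+ 2) - (x ^+ 2 + l * y) ^+ 2 = (x * (y - l)) ^+ 2 by ring.
  exact: sqr_ge0.
have qm0 : 0 <= q * m by exact: mulr_ge0.
have [h|h] := lerP (x ^+ 2 + l * y) 0.
  by rewrite (le_trans h).
rewrite -(ger0_norm (ltW h)) -(ger0_norm qm0) -ler_sqr ?nnegrE ?normr_ge0 //.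
by rewrite !real_normK ?num_real.
Qed.
Lemma mg (R : realType) (l : R) (l0 : 0 <= l) :
  measurable_fun [set: R] (fun y : R => l / Num.sqrt (y ^+ 2 + l ^+ 2)).
Proof.
have [->|lp] := eqVneq l 0.
  under eq_fun do rewrite mul0r. exact: measurable_cst.
have {lp}l0 : 0 < l by rewrite lt_def lp l0.
apply: continuous_measurable_fun => y.
have my : Num.sqrt (y ^+ 2 + l ^+ 2) != 0.
  by rewrite sqrtr_eq0 -ltNge; apply: ltr_wpDl; [exact: sqr_ge0 | exact: exprn_gt0].
have h1 : {for y, continuous (fun z : R => z ^+ 2 + l ^+ 2)}.
  have c1 : {for y, continuous (fun z : R => z)} by move=> ?; exact: cvg_id.
  have c2 := continuousM c1 c1.
  have c3 := continuousD c2 (@cst_continuous R R (l ^+ 2) y).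
  move=> ?; rewrite /=; under eq_fun do rewrite expr2. exact: c3.
have h2 : {for y, continuous (fun z : R => Num.sqrt (z ^+ 2 + l ^+ 2))}.
  exact: (continuous_comp h1 (@sqrt_continuous R (y ^+ 2 + l ^+ 2))).
have h3 := @continuousV _ _ (fun z : R => Num.sqrt (z ^+ 2 + l ^+ 2)) y my h2.
have h4 := continuousM (@cst_continuous R R l y) h3.
exact: h4.
Qed.

Section main.
Context d (T : measurableType d) (R : realType) (P : probability T R) (n : nat)
  (X : nat -> T -> R)
  (mX : forall k, (1 <= k <= n)%N -> measurable_fun setT (X k))
  (iX : forall k, (1 <= k <= n)%N -> P.-integrable setT (EFin \o X k))
  (indX : mutually_independent P n X).

Definition Yk k x := Num.sqrt (\sum_(1 <= j < k.+1) X j x ^+ 2).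
Definition Mk k x := Num.sqrt (X k x ^+ 2 + lam P X k.-1 ^+ 2).

Lemma P1 : fine (P setT) = 1.
Proof. exact: (congr1 fine (probability_setT P)). Qed.

Lemma lamS k : lam P X k.+1 = \int[P]_x Mk k.+1 x.
Proof. by []. Qed.

Lemma lam_ge0 k : 0 <= lam P X k.
Proof. by case: k => [|k] //; rewrite lamS; apply: Rintegral_ge0 => x _; exact: sqrtr_ge0. Qed.

Lemma Y0 x : Yk 0 x = 0.
Proof. by rewrite /Yk big_geq // sqrtr0. Qed.

Lemma Yge0 k x : 0 <= Yk k x.
Proof. exact: sqrtr_ge0. Qed.

Lemma YS k x : Yk k.+1 x = Num.sqrt (X k.+1 x ^+ 2 + Yk k x ^+ 2).
Proof.
rewrite /Yk (@big_nat_recr _ _ _ k.+1 1) // sqr_sqrtr; first by rewrite addrC.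
by apply: sumr_ge0 => i _; exact: sqr_ge0.
Qed.

Lemma msqrt : measurable_fun [set: R] (@Num.sqrt R).
Proof. exact: continuous_measurable_fun (@sqrt_continuous R). Qed.

Lemma mYk k : (k <= n)%N -> measurable_fun setT (Yk k).
Proof.
elim: k => [|k IH] kn.
  have -> : Yk 0 = cst 0 by apply/funext => x; rewrite Y0.
  exact: measurable_cst.
have -> : Yk k.+1 = fun x => Num.sqrt (X k.+1 x ^+ 2 + Yk k x ^+ 2).
  by apply/funext => x; rewrite YS.
apply: measurableT_comp; first exact: msqrt.
apply: measurable_funD; apply: measurable_funX.
  by apply: mX; rewrite kn.
by apply: IH; exact: ltnW.
Qed.

Lemma mMk k : (1 <= k <= n)%N -> measurable_fun setT (Mk k).
Proof.
move=> kn; apply: measurableT_comp; first exact: msqrt.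
apply: measurable_funD; last exact: measurable_cst.
by apply: measurable_funX; exact: mX.
Qed.

Lemma icst (D : set T) (mD : measurable D) (c : R) : P.-integrable D (EFin \o cst c).
Proof. exact: finite_measure_integrable_cst. Qed.

Lemma iMk k : (1 <= k <= n)%N -> P.-integrable setT (EFin \o Mk k).
Proof.
move=> kn.
have ib := integrableD measurableT (integrable_norm (iX k kn)) (@icst setT measurableT (lam P X k.-1)).
apply: (le_integrable measurableT _ _ ib).
  exact/measurable_EFinP/mMk.
move=> x _ /=; rewrite lee_fin ger0_norm ?sqrtr_ge0 //.
rewrite [X in _ <= X]ger0_norm ?addr_ge0 ?lam_ge0 //.
have := @sqrt_sq_le R (X k x) (lam P X k.-1) 0 (lam P X k.-1) (lam_ge0 _) (lexx 0) (lam_ge0 _).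
by rewrite add0r expr0n /= addr0 sqrtr_sqr => ->.
Qed.

Lemma iYk k : (k <= n)%N -> P.-integrable setT (EFin \o Yk k).
Proof.
elim: k => [|k IH] kn.
  by apply: (eq_integrable _ (cst 0%E)) => //; [move=> x _; rewrite /= Y0 | exact: integrable0].
have ik : P.-integrable setT (EFin \o X k.+1) by apply: iX; rewrite kn.
have ib := integrableD measurableT (integrable_norm ik) (IH (ltnW kn)).
apply: (le_integrable measurableT _ _ ib).
  exact/measurable_EFinP/mYk.
move=> x _ /=; rewrite lee_fin ger0_norm ?sqrtr_ge0 //.
rewrite [X in _ <= X]ger0_norm ?addr_ge0 ?Yge0 //.
have := @sqrt_sq_le R (X k.+1 x) (Yk k x) 0 (Yk k x) (Yge0 _ _) (lexx 0) (Yge0 _ _).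
by rewrite add0r expr0n /= addr0 sqrtr_sqr YS => ->.
Qed.

Lemma M_ge_lam k x : lam P X k.-1 <= Mk k x.
Proof.
rewrite /Mk -[leLHS](ger0_norm (lam_ge0 _)) -sqrtr_sqr ler_sqrt ?lerDr ?sqr_ge0 //.
by rewrite addr_ge0 // sqr_ge0.
Qed.

Lemma lam_le k : (k < n)%N -> lam P X k <= lam P X k.+1.
Proof.
move=> kn; rewrite lamS.
have -> : lam P X k = \int[P]_x (cst (lam P X k) x).
  by rewrite Rintegral_cst // P1 mulr1.
apply: le_Rintegral => //; first exact: icst.
  by apply: iMk; rewrite kn.
by move=> x _; exact: (M_ge_lam k.+1 x).
Qed.


Lemma upper_pt k x : Yk k x <= lam P X k + \sum_(1 <= j < k.+1) Num.max (Mk j x - lam P X j) 0.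
Proof.
elim: k => [|k IH].
  by rewrite Y0 big_geq // addr0.
rewrite YS (@big_nat_recr _ _ _ k.+1 1) //=.
set S := \sum_(1 <= j < k.+1) _ in IH *.
have S0 : 0 <= S by apply: sumr_ge0 => i _; by rewrite le_max lexx orbT.
have h1 := @sqrt_sq_le R (X k.+1 x) (Yk k x) (lam P X k) S (Yge0 _ _) (lam_ge0 _) S0 IH.
have h2 : Mk k.+1 x <= lam P X k.+1 + Num.max (Mk k.+1 x - lam P X k.+1) 0.
  by rewrite -lerBlDl le_max lexx.
rewrite /Mk /= in h2.
move: h1 h2; set a := Num.sqrt _; set b := Num.sqrt _; set m := Num.max _ _ => h1 h2.
lra.
Qed.

Lemma upper_int k : (k <= n)%N ->
  \int[P]_x (\sum_(1 <= j < k.+1) Num.max (Mk j x - lam P X j) 0) <= lam P X k /\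
  P.-integrable setT (EFin \o (fun x => \sum_(1 <= j < k.+1) Num.max (Mk j x - lam P X j) 0)).
Proof.
elim: k => [|k IH] kn.
  have E0 : (fun x => \sum_(1 <= j < 1) Num.max (Mk j x - lam P X j) 0) = cst 0.
    by apply/funext => x; rewrite big_geq.
  rewrite E0 Rintegral_cst // mul0r; split => //.
  exact: icst.
have [IH1 IH2] := IH (ltnW kn).
have k1 : (1 <= k.+1 <= n)%N by rewrite kn.
have mmax : measurable_fun setT (fun x => Num.max (Mk k.+1 x - lam P X k.+1) 0).
  apply: measurable_maxr; last exact: measurable_cst.
  by apply: measurable_funB; [exact: mMk | exact: measurable_cst].
have imax : P.-integrable setT (EFin \o (fun x => Num.max (Mk k.+1 x - lam P X k.+1) 0)).
  apply: (le_integrable measurableT _ _ (iMk _ k1)); first exact/measurable_EFinP.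
  move=> x _ /=; rewrite lee_fin ger0_norm ?le_max ?lexx ?orbT //.
  rewrite ger0_norm ?sqrtr_ge0 // ge_max sqrtr_ge0 andbT.
  by rewrite lerBlDr lerDl (lam_ge0 k.+1).
have E : (fun x => \sum_(1 <= j < k.+2) Num.max (Mk j x - lam P X j) 0) =
   (fun x => \sum_(1 <= j < k.+1) Num.max (Mk j x - lam P X j) 0 + Num.max (Mk k.+1 x - lam P X k.+1) 0).
  by apply/funext => x; rewrite (@big_nat_recr _ _ _ k.+1 1).
have iS : P.-integrable setT (EFin \o (fun x => \sum_(1 <= j < k.+2) Num.max (Mk j x - lam P X j) 0)).
  rewrite E; apply: (eq_integrable _ ((EFin \o _) \+ (EFin \o _))) => //; last exact: integrableD.
split => //.
rewrite E RintegralD //.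
have im : P.-integrable setT (EFin \o (fun x => Mk k.+1 x - lam P X k)).
  have h := integrableB measurableT (iMk _ k1) (@icst setT measurableT (lam P X k)).
  by apply: (eq_integrable measurableT _ _ _ h) => x _; rewrite /= EFinB.
have h : \int[P]_x Num.max (Mk k.+1 x - lam P X k.+1) 0 <= lam P X k.+1 - lam P X k.
  have -> : lam P X k.+1 - lam P X k = \int[P]_x (Mk k.+1 x - lam P X k).
    by rewrite RintegralB //; [rewrite Rintegral_cst // P1 mulr1 | exact: iMk | exact: icst].
  apply: le_Rintegral => // x _.
  rewrite ge_max subr_ge0 (M_ge_lam k.+1 x) andbT.
  by rewrite lerB // lam_le.
lra.
Qed.

Lemma upper_final : (\int[P]_x (Yk n x)%:E <= (2 * lam P X n)%:E)%E.
Proof.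
have iY := iYk _ (leqnn n).
rewrite -[X in (X <= _)%E]fineK; last exact: integrable_fin_num.
rewrite lee_fin; change (\int[P]_x Yk n x <= 2 * lam P X n).
have [h1 h2] := upper_int _ (leqnn n).
have ic := @icst setT measurableT (lam P X n).
have iS : P.-integrable setT (EFin \o (fun x => lam P X n + \sum_(1 <= j < n.+1) Num.max (Mk j x - lam P X j) 0)).
  have h := integrableD measurableT ic h2.
  by apply: (eq_integrable measurableT _ _ _ h) => x _; rewrite /= EFinD.
apply: (@le_trans _ _ (\int[P]_x (lam P X n + \sum_(1 <= j < n.+1) Num.max (Mk j x - lam P X j) 0))).
  by apply: le_Rintegral => // x _; exact: upper_pt.
rewrite RintegralD // Rintegral_cst // P1 mulr1.
lra.
Qed.

Definition Aev (J : seq nat) (B : nat -> set R) := \big[setI/setT]_(j <- J) (X j @^-1` B j).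

Lemma mAev J B : all (fun j => 1 <= j <= n)%N J -> (forall j, measurable (B j)) ->
  measurable (Aev J B).
Proof.
elim: J => [|j J IH] /=; first by rewrite /Aev big_nil.
move=> /andP[hj hJ] mB; rewrite /Aev big_cons; apply: measurableI.
  rewrite -[X in measurable X]setTI; exact: (mX j hj measurableT (B j) (mB j)).
exact: IH.
Qed.

Lemma PAev J B : uniq J -> all (fun j => 1 <= j <= n)%N J -> (forall j, measurable (B j)) ->
  P (Aev J B) = (\prod_(j <- J) P (X j @^-1` B j))%E.
Proof. by move=> uJ aJ mB; exact: indX. Qed.

Lemma indep_step k J B B0 : (k.+1 <= n)%N -> uniq J -> all (fun j => k.+1 < j <= n)%N J ->
  (forall j, measurable (B j)) -> measurable B0 ->
  P (Aev J B `&` X k.+1 @^-1` B0) = (P (Aev J B) * P (X k.+1 @^-1` B0))%E /\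
  Aev J B `&` X k.+1 @^-1` B0 = Aev (k.+1 :: J) (fun j => if j == k.+1 then B0 else B j).
Proof.
move=> kn uJ aJ mB mB0.
set B' := fun j => if j == k.+1 then B0 else B j.
have nJ : k.+1 \notin J by apply/negP => /(allP aJ) /=; rewrite ltnn.
have aJ1 : all (fun j => 1 <= j <= n)%N J.
  by apply/allP => j /(allP aJ) /andP[h1 h2]; rewrite h2 andbT (ltn_trans _ h1).
have mB' j : measurable (B' j) by rewrite /B'; case: ifP.
have eqJ : Aev J B' = Aev J B.
  rewrite /Aev; apply: eq_big_seq => j jJ; rewrite /B' ifN //.
  by apply/negP => /eqP ej; move: nJ; rewrite -ej jJ.
have eqs : Aev (k.+1 :: J) B' = X k.+1 @^-1` B0 `&` Aev J B.
  by rewrite /Aev big_cons {1}/B' eqxx; congr (_ `&` _); exact: eqJ.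
have uJ' : uniq (k.+1 :: J) by rewrite /= nJ uJ.
have aJ' : all (fun j => 1 <= j <= n)%N (k.+1 :: J) by rewrite /= kn aJ1.
have eqP' : P (Aev (k.+1 :: J) B') = (P (X k.+1 @^-1` B0) * P (Aev J B))%E.
  by rewrite PAev // big_cons {1}/B' eqxx -PAev // eqJ.
split; last by rewrite eqs setIC.
by rewrite setIC -eqs eqP' muleC.
Qed.


Lemma lower k : (k <= n)%N -> forall J B, uniq J -> all (fun j => k < j <= n)%N J ->
  (forall j, measurable (B j)) ->
  lam P X k * fine (P (Aev J B)) <= \int[P]_(x in Aev J B) Yk k x.
Proof.
elim: k => [|k IH] kn J B uJ aJ mB.
  by rewrite mul0r; apply: Rintegral_ge0 => x _; exact: Yge0.
have aJ1 : all (fun j => 1 <= j <= n)%N J.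
  by apply/allP => j /(allP aJ) /andP[h1 h2]; rewrite h2 andbT (ltn_trans _ h1).
set A := Aev J B.
have mA : measurable A := mAev J B aJ1 mB.
set l := lam P X k.
have l0 : 0 <= l := lam_ge0 k.
have k1 : (1 <= k.+1 <= n)%N by rewrite kn.
pose g y := l / Num.sqrt (y ^+ 2 + l ^+ 2).
pose V x := g (X k.+1 x).
pose Z x := Yk k x - l.
have mg' : measurable_fun setT g := @mg R l l0.
have mV : measurable_fun setT V := measurableT_comp mg' (mX _ k1).
have mZ : measurable_fun setT Z := measurable_funB (mYk _ (ltnW kn)) (measurable_cst _).
have V0 x : 0 <= V x by apply: divr_ge0 => //; exact: sqrtr_ge0.
have V1 x : V x <= 1.
  have := M_ge_lam k.+1 x; rewrite /V /g /Mk /= -/l.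
  set m := Num.sqrt _ => lm.
  have [->|m0] := eqVneq m 0; first by rewrite invr0 mulr0 ler01.
  by rewrite ler_pdivrMr ?mul1r // lt_def m0 sqrtr_ge0.
have iZ : P.-integrable setT (EFin \o Z).
  have h := integrableB measurableT (iYk _ (ltnW kn)) (@icst setT measurableT l).
  by apply: (eq_integrable measurableT _ _ _ h) => x _; rewrite /= EFinB.
have iZA : P.-integrable A (EFin \o Z) := integrableS measurableT mA (@subsetT _ _) iZ.
have iMA : P.-integrable A (EFin \o Mk k.+1) :=
  integrableS measurableT mA (@subsetT _ _) (iMk _ k1).
have Vb x : `|V x| <= 1 by rewrite ger0_norm.
have iVZ : P.-integrable A (EFin \o (fun x => V x * Z x)) := @iMul _ _ _ P A mA V Z mV mZ Vb iZA.
have pt x : Mk k.+1 x + V x * Z x <= Yk k.+1 x.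
  by rewrite YS; exact: (@tangent R (X k.+1 x) (Yk k x) l l0 (Yge0 k x)).
have step1 : \int[P]_(x in A) Mk k.+1 x + \int[P]_(x in A) (V x * Z x) <=
             \int[P]_(x in A) Yk k.+1 x.
  rewrite -RintegralD //; apply: le_Rintegral => //.
    have h := integrableD mA iMA iVZ.
    by apply: (eq_integrable mA _ _ _ h) => x _; rewrite /= EFinD.
  exact: integrableS measurableT mA (@subsetT _ _) (iYk _ kn).
have step2 : \int[P]_(x in A) Mk k.+1 x = fine (P A) * lam P X k.+1.
  pose W : {mfun T >-> R} := mfun_Sub (mem_set (mX _ k1)).
  have hW B0 : measurable B0 -> P (A `&` W @^-1` B0) = (P A * P (W @^-1` B0))%E.
    by move=> mB0; exact: (indep_step k J B B0 kn uJ aJ mB mB0).1.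
  pose h y := (Num.sqrt (y ^+ 2 + l ^+ 2))%:E.
  have mh : measurable_fun [set: R] h.
    apply/measurable_EFinP; apply: measurableT_comp; first exact: msqrt.
    by apply: measurable_funD; [apply: measurable_funX | exact: measurable_cst].
  have h0 y : (0 <= h y)%E by rewrite lee_fin sqrtr_ge0.
  have := @indep_int _ _ _ P A mA W hW h mh h0.
  rewrite /Rintegral lamS /Rintegral => ->.
  rewrite fineM //; first exact: fin_num_measure.
  change (\int[P]_x (EFin \o Mk k.+1) x \is a fin_num)%E.
  exact: (@integrable_fin_num _ _ _ P setT measurableT _ (iMk _ k1)).
have step3 : 0 <= \int[P]_(x in A) (V x * Z x).
  apply: (@stair _ _ _ P A mA V Z mV mZ V0 V1 iZA) => c t.
  set B0 := [set y | t <= c * g y].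
  have mB0 : measurable B0.
    have -> : B0 = (fun y => c * g y) @^-1` `[t, +oo[.
      by apply/seteqP; split => y /=; rewrite in_itv /= andbT.
    have mcg : measurable_fun setT (fun y => c * g y) := measurable_funM (measurable_cst c) mg'.
    rewrite -[X in measurable X]setTI; exact: (mcg measurableT _ (measurable_itv _)).
  have [_ eA] := indep_step k J B B0 kn uJ aJ mB mB0.
  set B' := fun j => if j == k.+1 then B0 else B j.
  have -> : A `&` [set x | t <= c * V x] = Aev (k.+1 :: J) B' by rewrite -eA.
  have nJ : k.+1 \notin J by apply/negP => /(allP aJ) /=; rewrite ltnn.
  have uJ' : uniq (k.+1 :: J) by rewrite /= nJ uJ.
  have aJ' : all (fun j => k < j <= n)%N (k.+1 :: J).
    rewrite /= ltnSn kn /=; apply/allP => j /(allP aJ) /andP[h1 h2].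
    by rewrite h2 andbT ltnW.
  have mB' j : measurable (B' j) by rewrite /B'; case: ifP.
  have := IH (ltnW kn) (k.+1 :: J) B' uJ' aJ' mB'.
  have aJ1' : all (fun j => 1 <= j <= n)%N (k.+1 :: J) by rewrite /= kn aJ1.
  have mA' := mAev (k.+1 :: J) B' aJ1' mB'.
  rewrite /Z RintegralB //; last first.
  - exact: icst.
  - exact: integrableS measurableT mA' (@subsetT _ _) (iYk _ (ltnW kn)).
  rewrite Rintegral_cst // -/l => h; lra.
rewrite mulrC; lra.
Qed.

End main.

Theorem corollary6p2 (d : measure_display) (T : measurableType d) (R : realType)
  (P : probability T R) (n : nat) (X : nat -> T -> R)
  (mX : forall k, (1 <= k <= n)%N -> measurable_fun setT (X k))
  (iX : forall k, (1 <= k <= n)%N -> P.-integrable setT (EFin \o X k))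
  (indX : mutually_independent P n X) :
  ((lam P X n)%:E <= \int[P]_x (Num.sqrt (\sum_(1 <= k < n.+1) X k x ^+ 2))%:E)%E /\
  (\int[P]_x (Num.sqrt (\sum_(1 <= k < n.+1) X k x ^+ 2))%:E <= (2 * lam P X n)%:E)%E.
Proof.
split; last exact: (@upper_final d T R P n X mX iX).
have := @lower d T R P n X mX iX indX n (leqnn n) [::] (fun _ => setT) isT isT (fun _ => measurableT).
have -> : @Aev d T R X [::] (fun _ => setT) = setT by rewrite /Aev big_nil.
rewrite (@P1 d T R P) mulr1 => h.
have iY := @iYk d T R P n X mX iX n (leqnn n).
rewrite -[X in (_ <= X)%E]fineK; last exact: (@integrable_fin_num _ _ _ P setT measurableT _ iY).
by rewrite lee_fin.
Qed.
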